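(* Let $A,Q\in\mathbb{R}^{n\times n}$, $B,L\in\mathbb{R}^{n\times m}$, $R\in\mathbb{R}^{m\times m}$, and $A_0^i\in\mathbb{R}^{n\times n}$, $B_0^i\in\mathbb{R}^{n\times m}$ ($i=1,\dots,r$), with $R\succ0$ and $\begin{bmatrix} Q & L\\ L^{\mathsf T} & R\end{bmatrix}\succeq 0$. For symmetric $X\succeq 0$ define $$\Omega(X)=\begin{bmatrix} -G_{\mathrm c}(X) & -A_{\mathrm c}(X)\\ -[A_{\mathrm c}(X)]^{\mathsf T} & H_{\mathrm c}(X)\end{bmatrix}\in\mathbb{R}^{2n\times 2n}.$$ Then $\Omega(X)\succeq\Omega(Y)$ for all symmetric $X,Y$ with $X\succeq Y\succeq 0$.
   Context: For symmetric $X$: $\Pi_{11}(X)=\sum_{i=1}^r (A_0^i)^{\mathsf T}XA_0^i$, $\Pi_{12}(X)=\sum_{i=1}^r (A_0^i)^{\mathsf T}XB_0^i$, $\Pi_{22}(X)=\sum_{i=1}^r (B_0^i)^{\mathsf T}XB_0^i$; $L_{\mathrm c}(X)=L+\Pi_{12}(X)$, $R_{\mathrm c}(X)=R+\Pi_{22}(X)$, $Q_{\mathrm c}(X)=Q+\Pi_{11}(X)$; $A_{\mathrm c}(X)=A-B[R_{\mathrm c}(X)]^{-1}[L_{\mathrm c}(X)]^{\mathsf T}$, $G_{\mathrm c}(X)=B[R_{\mathrm c}(X)]^{-1}B^{\mathsf T}$, $H_{\mathrm c}(X)=Q_{\mathrm c}(X)-L_{\mathrm c}(X)[R_{\mathrm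 c}(X)]^{-1}[L_{\mathrm c}(X)]^{\mathsf T}$. $\succeq$ is the Loewner order on symmetric matrices. *)

(* Defs.v *)
From HB Require Import structures.
From mathcomp Require Import all_boot all_order all_algebra.
Set Implicit Arguments. Unset Strict Implicit. Unset Printing Implicit Defensive.
Import Order.TTheory GRing.Theory Num.Theory.
Local Open Scope ring_scope.

Section Defs.
Variable R : realFieldType.

Definition symmx n (M : 'M[R]_n) : Prop := M^T = M.

Definition psdmx n (M : 'M[R]_n) : Prop :=
  symmx M /\ forall v : 'cV[R]_n, 0 <= (v^T *m M *m v) 0 0.

Definition pdmx n (M : 'M[R]_n) : Prop :=
  symmx M /\ forall v : 'cV[R]_n, v != 0 -> 0 < (v^T *m M *m v) 0 0.

Definition loewner_ge n (M N : 'M[R]_n) : Prop := psdmx (M - N).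

Variables (n m r : nat).
Variables (A Q : 'M[R]_n) (B L : 'M[R]_(n, m)) (Rm : 'M[R]_m).
Variables (A0 : 'I_r -> 'M[R]_n) (B0 : 'I_r -> 'M[R]_(n, m)).

Definition Pi11 (X : 'M[R]_n) : 'M[R]_n := \sum_(i < r) ((A0 i)^T *m X *m A0 i).
Definition Pi12 (X : 'M[R]_n) : 'M[R]_(n, m) := \sum_(i < r) ((A0 i)^T *m X *m B0 i).
Definition Pi22 (X : 'M[R]_n) : 'M[R]_m := \sum_(i < r) ((B0 i)^T *m X *m B0 i).

Definition Lc X := L + Pi12 X.
Definition Rc X := Rm + Pi22 X.
Definition Qc X := Q + Pi11 X.
Definition Ac X := A - B *m invmx (Rc X) *m (Lc X)^T.
Definition Gc X := B *m invmx (Rc X) *m B^T.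
Definition Hc X := Qc X - Lc X *m invmx (Rc X) *m (Lc X)^T.

Definition Omega X : 'M[R]_(n + n) :=
  block_mx (- Gc X) (- Ac X) (- (Ac X)^T) (Hc X).

End Defs.

(* Main.v *)
Require Import Defs.
From HB Require Import structures.
From mathcomp Require Import all_boot all_order all_algebra. From mathcomp Require Import lra.
Import Order.TTheory GRing.Theory Num.Theory.
Local Open Scope ring_scope.

Section H.
Variable R : realFieldType.

Lemma trD p q (M N : 'M[R]_(p,q)) : (M + N)^T = M^T + N^T.
Proof. by apply/matrixP=> i j; rewrite !mxE. Qed.
Lemma trN p q (M : 'M[R]_(p,q)) : (- M)^T = - M^T.
Proof. by apply/matrixP=> i j; rewrite !mxE. Qed.
Lemma trB p q (M N : 'M[R]_(p,q)) : (M - N)^T = M^T - N^T.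
Proof. by rewrite trD trN. Qed.

Lemma e_add p q (M N : 'M[R]_(p,q)) i j : (M + N) i j = M i j + N i j.
Proof. by rewrite mxE. Qed.
Lemma e_opp p q (M : 'M[R]_(p,q)) i j : (- M) i j = - M i j.
Proof. by rewrite mxE. Qed.
Lemma e_tr (M : 'M[R]_(1,1)) : M^T 0 0 = M 0 0.
Proof. by rewrite mxE. Qed.
Lemma e_sym k (u w : 'cV[R]_k) (M : 'M[R]_k) : M^T = M ->
  (w^T *m M *m u) 0 0 = (u^T *m M *m w) 0 0.
Proof. by move=> HM; rewrite -e_tr !trmx_mul trmxK HM mulmxA. Qed.

Lemma e_trq k l (x : 'cV[R]_k) (y : 'cV[R]_l) (M : 'M[R]_(l,k)) :
  (x^T *m M^T *m y) 0 0 = (y^T *m M *m x) 0 0.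
Proof. by rewrite -e_tr !trmx_mul !trmxK mulmxA. Qed.

Lemma omega_form n m (A Qc: 'M[R]_n) (B Lc : 'M[R]_(n,m)) (Rc: 'M[R]_m) (a b : 'cV[R]_n) :
 (invmx Rc)^T = invmx Rc ->
 ((col_mx a b)^T *m block_mx (-(B *m invmx Rc *m B^T)) (-(A - B *m invmx Rc *m Lc^T))
    (-(A - B *m invmx Rc *m Lc^T)^T) (Qc - Lc *m invmx Rc *m Lc^T) *m col_mx a b) 0 0
 = (b^T *m Qc *m b) 0 0 - 2 * (a^T *m A *m b) 0 0
   - ((Lc^T *m b - B^T *m a)^T *m invmx Rc *m (Lc^T *m b - B^T *m a)) 0 0.
Proof.
move=> HRi.
rewrite tr_col_mx mul_row_block mul_row_col.
rewrite !linearB /= !linearN /= !trmx_mul !trmxK HRi.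
rewrite ?mulmxDl ?mulmxDr ?mulmxBl ?mulmxBr ?mulNmx ?mulmxN ?mulmxA.
rewrite !(e_add, e_opp) e_trq.
lra.
Qed.

Lemma e_dot k (x y : 'cV[R]_k) : (x^T *m y) 0 0 = (y^T *m x) 0 0.
Proof. by rewrite -e_tr trmx_mul trmxK. Qed.

Lemma schur_eq k (Rx : 'M[R]_k) (u : 'cV[R]_k) : Rx \in unitmx ->
  (invmx Rx)^T = invmx Rx ->
  - (u^T *m invmx Rx *m u) 0 0 = 2 * (u^T *m (- (invmx Rx *m u))) 0 0
     + ((- (invmx Rx *m u))^T *m Rx *m (- (invmx Rx *m u))) 0 0.
Proof.
move=> HU HRi.
rewrite !linearN /= trmx_mul HRi ?mulmxN ?mulNmx !mulmxA (mulmxKV HU) !e_opp.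
lra.
Qed.

Lemma schur_le k (Rx : 'M[R]_k) (u w : 'cV[R]_k) : Rx \in unitmx ->
  (invmx Rx)^T = invmx Rx -> (forall z : 'cV[R]_k, 0 <= (z^T *m Rx *m z) 0 0) ->
  - (u^T *m invmx Rx *m u) 0 0 <= 2 * (u^T *m w) 0 0 + (w^T *m Rx *m w) 0 0.
Proof.
move=> HU HRi Hp.
have := Hp (w + invmx Rx *m u).
rewrite !linearD /= trmx_mul HRi ?mulmxDl ?mulmxDr !mulmxA !(mulmxKV HU) (mulmxK HU).
rewrite !e_add (e_dot _ w u).
lra.
Qed.
Lemma sum_sym k l r (C : 'I_r -> 'M[R]_(k,l)) (Z : 'M[R]_k) : Z^T = Z ->
  (\sum_i (C i)^T *m Z *m C i)^T = \sum_i (C i)^T *m Z *m C i.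
Proof.
move=> HZ; rewrite raddf_sum; apply: eq_bigr => i _.
by rewrite /= !trmx_mul trmxK HZ mulmxA.
Qed.

Lemma quad_sum k l1 l2 r (C : 'I_r -> 'M[R]_(k,l1)) (D : 'I_r -> 'M[R]_(k,l2))
  (Z : 'M[R]_k) (x : 'cV[R]_l1) (y : 'cV[R]_l2) :
  (x^T *m (\sum_i (C i)^T *m Z *m D i) *m y) 0 0
  = \sum_i ((C i *m x)^T *m Z *m (D i *m y)) 0 0.
Proof.
rewrite mulmx_sumr mulmx_suml summxE; apply: eq_bigr => i _.
by rewrite trmx_mul !mulmxA.
Qed.

Lemma quad_pos k (Z : 'M[R]_k) (x : 'cV[R]_k) : psdmx Z -> 0 <= (x^T *m Z *m x) 0 0.
Proof. by case=> _ ->. Qed.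

Lemma Rc_facts n m r (Rm : 'M[R]_m) (B0 : 'I_r -> 'M[R]_(n, m)) (Z : 'M[R]_n) :
  pdmx Rm -> psdmx Z ->
  [/\ (Rc Rm B0 Z)^T = Rc Rm B0 Z, Rc Rm B0 Z \in unitmx,
      (forall z : 'cV[R]_m, 0 <= (z^T *m Rc Rm B0 Z *m z) 0 0) &
      (invmx (Rc Rm B0 Z))^T = invmx (Rc Rm B0 Z)].
Proof.
move=> [sR pR] [sZ pZ].
have sym : (Rc Rm B0 Z)^T = Rc Rm B0 Z.
  by rewrite /Rc linearD /= sR /Pi22 sum_sym.
have q22 (z : 'cV[R]_m) : 0 <= (z^T *m Pi22 B0 Z *m z) 0 0.
  rewrite /Pi22 quad_sum; apply: sumr_ge0 => i _; exact: pZ.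
have pos (z : 'cV[R]_m) : z != 0 -> 0 < (z^T *m Rc Rm B0 Z *m z) 0 0.
  move=> nz; rewrite /Rc mulmxDr mulmxDl e_add.
  by apply: ltr_wpDr; [exact: q22 | exact: pR].
have U : Rc Rm B0 Z \in unitmx.
  rewrite unitmxE unitfE; apply/negP => /det0P [v nv Hv].
  have := pos v^T; rewrite trmx_eq0 => /(_ nv).
  by rewrite trmxK Hv mul0mx mxE ltxx.
split => //.
- move=> z; case: (eqVneq z 0) => [->|nz]; last exact/ltW/pos.
  by rewrite mulmx0 mxE.
- by rewrite trmx_inv sym.
Qed.
Lemma g_form n m r (A0 : 'I_r -> 'M[R]_n) (B0 : 'I_r -> 'M[R]_(n,m)) (Z : 'M[R]_n)
  (b : 'cV[R]_n) (w : 'cV[R]_m) : Z^T = Z ->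
 (b^T *m Pi11 A0 Z *m b) 0 0 + 2 * (b^T *m Pi12 A0 B0 Z *m w) 0 0
   + (w^T *m Pi22 B0 Z *m w) 0 0
 = \sum_i ((A0 i *m b + B0 i *m w)^T *m Z *m (A0 i *m b + B0 i *m w)) 0 0.
Proof.
move=> HZ; rewrite /Pi11 /Pi12 /Pi22 !quad_sum mulr_sumr -!big_split.
apply: eq_bigr => i _ /=.
rewrite trD ?mulmxDl ?mulmxDr ?mulmxDl !e_add.
rewrite (e_sym _ (A0 i *m b) (B0 i *m w) Z HZ).
lra.
Qed.

Lemma hu n m r (L B : 'M[R]_(n,m)) (A0 : 'I_r -> 'M[R]_n) (B0 : 'I_r -> 'M[R]_(n,m))
  (Z : 'M[R]_n) (a b : 'cV[R]_n) (w : 'cV[R]_m) :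
  (((Lc L A0 B0 Z)^T *m b - B^T *m a)^T *m w) 0 0
  = (b^T *m L *m w) 0 0 + (b^T *m Pi12 A0 B0 Z *m w) 0 0 - (a^T *m B *m w) 0 0.
Proof.
rewrite /Lc trB !trmx_mul !trmxK mulmxDr mulmxBl mulmxDl.
by rewrite !(e_add, e_opp).
Qed.

Lemma hr n m r (Rm : 'M[R]_m) (B0 : 'I_r -> 'M[R]_(n,m)) (Z : 'M[R]_n) (w : 'cV[R]_m) :
  (w^T *m Rc Rm B0 Z *m w) 0 0 = (w^T *m Rm *m w) 0 0 + (w^T *m Pi22 B0 Z *m w) 0 0.
Proof. by rewrite /Rc mulmxDr mulmxDl e_add. Qed.

Lemma hq n r (Q : 'M[R]_n) (A0 : 'I_r -> 'M[R]_n) (Z : 'M[R]_n) (b : 'cV[R]_n) :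
  (b^T *m Qc Q A0 Z *m b) 0 0 = (b^T *m Q *m b) 0 0 + (b^T *m Pi11 A0 Z *m b) 0 0.
Proof. by rewrite /Qc mulmxDr mulmxDl e_add. Qed.
End H.

Theorem lemma2p3 (R : realFieldType) (n m r : nat)
  (A Q : 'M[R]_n) (B L : 'M[R]_(n, m)) (Rm : 'M[R]_m)
  (A0 : 'I_r -> 'M[R]_n) (B0 : 'I_r -> 'M[R]_(n, m)) :
  pdmx Rm ->
  psdmx (block_mx Q L L^T Rm) ->
  forall X Y : 'M[R]_n, symmx X -> symmx Y ->
    loewner_ge X Y -> psdmx Y ->
    loewner_ge (Omega A Q B L Rm A0 B0 X) (Omega A Q B L Rm A0 B0 Y).
Proof.
move=> HRm Hblk X Y sX sY HXY HY.
have sQ : Q^T = Q.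
  by case: Hblk => /=; rewrite /symmx tr_block_mx => /eq_block_mx [].
have HX : psdmx X.
  split => // z; have := @quad_pos _ _ _ z HXY; have := @quad_pos _ _ _ z HY.
  rewrite mulmxBr mulmxBl e_add e_opp; lra.
have [sRX UX pX iX] := @Rc_facts _ _ _ _ _ B0 _ HRm HX.
have [sRY UY pY iY] := @Rc_facts _ _ _ _ _ B0 _ HRm HY.
have Osym (Z : 'M[R]_n) : Z^T = Z -> (invmx (Rc Rm B0 Z))^T = invmx (Rc Rm B0 Z) ->
    (Omega A Q B L Rm A0 B0 Z)^T = Omega A Q B L Rm A0 B0 Z.
  move=> sZ iZ; rewrite /Omega tr_block_mx !trN trmxK; congr block_mx.
    by rewrite /Gc !trmx_mul trmxK iZ mulmxA.
  by rewrite /Hc trB /Qc trD sQ /Pi11 sum_sym // !trmx_mul trmxK iZ mulmxA.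
have Of (Z : 'M[R]_n) : (invmx (Rc Rm B0 Z))^T = invmx (Rc Rm B0 Z) -> forall a b : 'cV[R]_n,
   ((col_mx a b)^T *m Omega A Q B L Rm A0 B0 Z *m col_mx a b) 0 0
   = (b^T *m Qc Q A0 Z *m b) 0 0 - 2 * (a^T *m A *m b) 0 0
   - (((Lc L A0 B0 Z)^T *m b - B^T *m a)^T *m invmx (Rc Rm B0 Z) *m ((Lc L A0 B0 Z)^T *m b - B^T *m a)) 0 0.
  by move=> iZ a b; rewrite /Omega /Gc /Ac /Hc; apply: omega_form.
split.
  by rewrite /symmx trB !Osym.
move=> v; rewrite -(vsubmxK v); set a := usubmx v; set b := dsubmx v.
rewrite mulmxBr mulmxBl e_add e_opp !Of //.
have E1 := @schur_eq _ _ _ ((Lc L A0 B0 X)^T *m b - B^T *m a) UX iX.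
set w := - (invmx (Rc Rm B0 X) *m _) in E1; clearbody w.
have E2 := @schur_le _ _ _ ((Lc L A0 B0 Y)^T *m b - B^T *m a) w UY iY pY.
rewrite !hu !hr in E1 E2.
rewrite !hq.
have GX := @g_form _ _ _ _ A0 B0 _ b w sX.
have GY := @g_form _ _ _ _ A0 B0 _ b w sY.
have Gd : 0 <= \sum_i ((A0 i *m b + B0 i *m w)^T *m X *m (A0 i *m b + B0 i *m w)) 0 0
   - \sum_i ((A0 i *m b + B0 i *m w)^T *m Y *m (A0 i *m b + B0 i *m w)) 0 0.
  rewrite -sumrB; apply: sumr_ge0 => i _.
  rewrite -e_opp -e_add -mulmxBl -mulmxBr; exact: quad_pos.
lra.
Qed.
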